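(* Let $y\ge 1$ and $m\ge 2$ be integers. Consider the random walk $(X_t)_{t\ge 0}$ on $\mathbb{Z}$ with $X_0=m-1$ whose steps are independent and equal to $+y$ or $-1$, each with probability $\tfrac12$, stopped at the first time $\tau$ at which $X_\tau\in\{0\}\cup\{m,m+1,\dots,m+y-1\}$. For $k\ge 0$ let $\ell_k$ be the probability that $\tau<\infty$, $X_\tau=0$, and exactly $k$ of the first $\tau$ steps are $+y$ steps, and set $$p_l(z)=\sum_{k\ge 0}\ell_k\, z^{yk}.$$ For an integer $k$ define $$u[y,k](z)=\sum_{\substack{n\ge 0\\ (y+1)n-k<0}}\frac{z^{yn}}{2^{(y+1)n+1-k}}\binom{(y+1)n-k}{n}.$$ Then, as formal power series in $z$ (equivalently, as analytic functions for $|z|$ small), $$p_l(z)=\frac{1}{u[y,m](z)}.$$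
   Context: For an integer $a$ (possibly negative) and $n\ge 0$, $\binom{a}{n}=a(a-1)\cdots(a-n+1)/n!$. The sum defining $u[y,k]$ is finite, and is $0$ when it is empty. Before absorption the walk stays in $\{1,\dots,m-1\}$, so a $+y$ step from there lands in $\{2,\dots,m+y-1\}$ and the walk cannot jump over the right absorbing set $\{m,\dots,m+y-1\}$. Equivalently, $p_l(z)=z^{-(m-1)}\sum_j P(X_\tau=0,\ \text{exactly } j \text{ steps are } -1)\,z^j$, i.e. $z$ marks backward steps, normalized by the minimal number $m-1$ of backward steps. (This is the probability of being absorbed at the left barrier $0$, for a walk started next to the right barrier.) *)

(* Defs.v *)
From HB Require Import structures.
From mathcomp Require Import all_boot all_order all_algebra.
From mathcomp Require Import all_classical all_reals all_analysis.
Set Implicit Arguments. Unset Strict Implicit. Unset Printing Implicit Defensive.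
Import Order.TTheory GRing.Theory Num.Theory.
Import numFieldNormedType.Exports.
Local Open Scope ring_scope.

(* A step sequence: true = step +y, false = step -1. *)
Definition pos (y m : nat) (s : seq bool) (j : nat) : int :=
  (m.-1)%:Z + (y * count id (take j s))%:Z - (count (fun b => ~~ b) (take j s))%:Z.

Definition absorbing (y m : nat) (x : int) : bool :=
  (x == 0) || ((m%:Z <= x) && (x <= (m + y).-1%:Z)).

(* The event, determined by the first t steps s (size t):
   tau = t, X_tau = 0, and exactly k of the first tau steps are +y. *)
Definition event (y m k : nat) (s : seq bool) : bool :=
  [forall j : 'I_(size s), ~~ absorbing y m (pos y m s j)] &&
  (pos y m s (size s) == 0) && (count id s == k).

(* P(tau = t, X_tau = 0, exactly k up-steps): fair independent steps. *)
Definition ell_t {R : realType} (y m k t : nat) : R :=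
  #|[pred s : t.-tuple bool | event y m k s]|%:R / 2%:R ^+ t.

Definition ell {R : realType} (y m k : nat) : R :=
  limn (series (fun t => @ell_t R y m k t)).

Definition pl_coef {R : realType} (y m i : nat) : R :=
  if (y %| i)%N then @ell R y m (i %/ y) else 0.

Definition gbinom {R : realType} (a : int) (n : nat) : R :=
  (\prod_(i < n) (a - i%:Z)%:~R) / (n`!)%:R.

Definition u_coef {R : realType} (y : nat) (k : int) (i : nat) : R :=
  if (y %| i)%N && (((y.+1 * (i %/ y))%N%:Z - k) < 0)
  then @gbinom R ((y.+1 * (i %/ y))%N%:Z - k) (i %/ y) /
       (2%:R : R) ^ ((y.+1 * (i %/ y)).+1%:Z - k)
  else 0.

(* Main.v *)
Require Import Defs.
Set Warnings "-all".
From HB Require Import structures.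
From mathcomp Require Import all_boot all_order all_algebra.
From mathcomp Require Import all_classical all_reals all_analysis.
From mathcomp Require Import zify ring.
Import Order.TTheory GRing.Theory Num.Theory.
Import numFieldNormedType.Exports.
Local Open Scope ring_scope.
Section Walk.
Variables (y m : nat).

Fixpoint ev (x : int) (k : nat) (s : seq bool) : bool :=
  match s with
  | [::] => (x == 0) && (k == 0)%N
  | b :: s' => ~~ absorbing y m x &&
      (if b then (0 < k)%N && ev (x + y%:Z) k.-1 s' else ev (x - 1) k s')
  end.

Definition posx (x : int) (s : seq bool) (j : nat) : int :=
  x + (y * count id (take j s))%:Z - (count (fun b => ~~ b) (take j s))%:Z.

Lemma forall_ordS n (P : nat -> bool) :
  [forall j : 'I_n.+1, P j] = P 0%N && [forall j : 'I_n, P j.+1].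
Proof.
apply/forallP/andP => [H|[H0 H]].
  split; first exact: (H ord0).
  by apply/forallP => j; exact: (H (lift ord0 j)).
case=> [[|j] hj] //=; exact: (forallP H (Ordinal (hj : (j < n)%N))).
Qed.

Lemma posx0 x s : posx x s 0 = x.
Proof. by rewrite /posx take0 /= muln0 subr0 addr0. Qed.

Lemma posxS x b s j :
  posx x (b :: s) j.+1 = posx (x + (if b then y%:Z else -1)) s j.
Proof.
rewrite /posx /=; case: b => /=; rewrite ?mulnDr ?muln1 ?add0n ?add1n.
  by rewrite PoszD; ring.
by rewrite -addn1 PoszD; ring.
Qed.

Lemma evE x k s : ev x k s =
  [forall j : 'I_(size s), ~~ absorbing y m (posx x s j)] &&
  (posx x s (size s) == 0) && (count id s == k).
Proof.
elim: s x k => [|b s IH] x k /=.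
  rewrite posx0; have -> : [forall j : 'I_0, ~~ absorbing y m (posx x [::] j)].
    by apply/forallP => -[].
  by rewrite /= [(0%N == _)]eq_sym.
rewrite (forall_ordS _ (fun j => ~~ absorbing y m (posx x (b :: s) j))) /=.
rewrite posx0 posxS.
under eq_forallb => j do rewrite posxS.
case: b => /=; rewrite ?IH.
  case: k => [|k] /=; first by rewrite !andbF.
  rewrite eqSS /=.
  by case: (absorbing y m x); rewrite ?andbF //= andbA.
by case: (absorbing y m x).
Qed.

Lemma cardE' (T : finType) (P : pred T) : #|[pred s | P s]| = \sum_(s : T) (P s : nat).
Proof. by rewrite -sum1_card big_mkcond /=; apply: eq_bigr => s _; rewrite inE; case: (P s). Qed.

Lemma card_cons (P : pred (seq bool)) t :
  #|[pred s : t.+1.-tuple bool | P s]| =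
  (#|[pred s : t.-tuple bool | P (true :: s)]| + #|[pred s : t.-tuple bool | P (false :: s)]|)%N.
Proof.
rewrite !cardE'.
rewrite (reindex (fun p : bool * t.-tuple bool => cons_tuple p.1 p.2)) /=; last first.
  exists (fun s => (thead s, behead_tuple s)) => [[b s]|s] _ /=.
    by congr pair; apply: val_inj.
  by rewrite [RHS]tuple_eta; apply: val_inj.
have -> : \sum_(j : bool * t.-tuple bool) (P (cons_tuple j.1 j.2) : nat) =
   \sum_(b : bool) \sum_(s : t.-tuple bool) (P (b :: s) : nat).
  by rewrite pair_big.
by rewrite big_bool.
Qed.

Lemma card_tuple0 (P : pred (seq bool)) :
  #|[pred s : 0.-tuple bool | P s]| = P [::].
Proof.
rewrite cardE' (big_pred1 [tuple]) //=.
by move=> s; apply/esym/eqP; exact: tuple0.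
Qed.
Definition cnt (x : int) (k t : nat) : nat := #|[pred s : t.-tuple bool | ev x k s]|.

Lemma cnt0 x k : cnt x k 0 = ((x == 0) && (k == 0%N)) :> nat.
Proof. by rewrite /cnt (card_tuple0 (ev x k)). Qed.

Lemma cntS x k t : cnt x k t.+1 = if absorbing y m x then 0%N else
  (cnt (x - 1) k t + (if k is k'.+1 then cnt (x + y%:Z) k' t else 0))%N.
Proof.
rewrite /cnt (card_cons (ev x k)) /=.
case: (absorbing y m x) => /=; first by rewrite !cardE' !big1.
case: k => [|k] /=; last by rewrite addnC.
by rewrite addn0 [X in (X + _)%N]cardE' big1.
Qed.

Lemma count_idN s : (count id s + count (fun b => ~~ b) s)%N = size s.
Proof. by elim: s => //= b s <-; case: b => /=; rewrite ?add0n ?add1n ?addSn ?addnS. Qed.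

Lemma ev_size x k s : ev x k s -> (size s)%:Z = x + (y.+1 * k)%N%:Z.
Proof.
rewrite evE => /andP[/andP[_ /eqP]] + /eqP Hk.
rewrite /posx take_size Hk -(count_idN s) Hk => H.
rewrite mulSn !PoszD; move: H.
lia.
Qed.

Lemma cnt_len x k t : t%:Z != x + (y.+1 * k)%N%:Z -> cnt x k t = 0%N.
Proof.
move=> Ht; rewrite /cnt cardE' big1 // => s _.
case E: (ev x k s) => //; move: Ht; rewrite -(ev_size _ _ _ E) size_tuple eqxx //.
Qed.

Definition Ck (x k : nat) : nat := cnt x%:Z k (x + y.+1 * k).

Lemma absorbE (x : nat) : absorbing y m x%:Z = (x == 0)%N || ((m <= x)%N && (x < m + y)%N).
Proof.
rewrite /absorbing.
case: (x =P 0)%N => [->|h] //=.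
have -> : (x%:Z == 0) = false by apply/eqP; lia.
apply/andP/andP => -[h1 h2]; split; lia.
Qed.

Lemma Ck0 k : Ck 0 k = (k == 0)%N.
Proof.
rewrite /Ck add0n; case: k => [|k]; first by rewrite muln0 cnt0.
rewrite mulnS addSn cntS absorbE //.
Qed.

Lemma Ckrec x k : (0 < x)%N -> (x < m)%N ->
  Ck x k = (Ck x.-1 k + (if k is k'.+1 then Ck (x + y) k' else 0))%N.
Proof.
move=> h0 hm; rewrite /Ck.
have -> : (x + y.+1 * k = (x.-1 + y.+1 * k).+1)%N by lia.
rewrite cntS absorbE.
have -> : ((x == 0)%N || ((m <= x)%N && (x < m + y)%N)) = false.
  by apply/negbTE; apply/negP => /orP[/eqP|/andP[]]; lia.
have -> : x%:Z - 1 = (x.-1)%:Z by lia.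
case: k => [|k] //.
have -> : (x.-1 + y.+1 * k.+1 = x + y + y.+1 * k)%N by rewrite mulnS; lia.
by rewrite PoszD.
Qed.

Lemma Ckbig x k : (0 < m)%N -> (m <= x)%N -> (x < m + y)%N -> Ck x k = 0%N.
Proof.
move=> h0 h1 h2; rewrite /Ck.
have -> : (x + y.+1 * k = (x.-1 + y.+1 * k).+1)%N by lia.
rewrite cntS absorbE h1 h2 orbT //.
Qed.
Lemma binlem j K : (0 < y)%N ->
  'C(j.+1 - y * K.+1, K.+1) =
  ('C(j - y * K.+1, K.+1) + (if (y <= j)%N then 'C(j - y * K.+1, K) else 0))%N.
Proof.
move=> hy.
case: (leqP (y * K.+1) j) => h.
  rewrite subSn // binS.
  have -> : (y <= j)%N by apply: leq_trans h; rewrite leq_pmulr.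
  by [].
have -> : (j.+1 - y * K.+1 = 0)%N by lia.
have -> : (j - y * K.+1 = 0)%N by lia.
rewrite !bin0n /=.
case: (leqP y j) => // hj.
case: K h => [|K] h; first by rewrite muln1 in h; lia.
by [].
Qed.

Variable R : realType.

Definition beta (n : nat) : R := (-1) ^+ n * ('C(m.-1 - y * n, n))%:R.
Definition H (x K : nat) : R :=
  if (x <= m.-1)%N then (-1) ^+ K * ('C(m.-1 - x - y * K, K))%:R else 0.
Definition E (x K : nat) : R := \sum_(k < K.+1) (Ck x k)%:R * beta (K - k).

Lemma E0 K : E 0 K = beta K.
Proof.
rewrite /E big_ord_recl /= Ck0 /= mul1r subn0 big1 ?addr0 // => i _.
by rewrite Ck0 /= mul0r.
Qed.

Lemma Erec x K : (0 < x)%N -> (x < m)%N ->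
  E x K = E x.-1 K + (if K is K'.+1 then E (x + y) K' else 0).
Proof.
move=> h0 hm; rewrite /E.
under eq_bigr => k _ do rewrite Ckrec // natrD mulrDl.
rewrite big_split /=; congr (_ + _).
case: K => [|K]; first by rewrite big_ord1 /= mul0r.
rewrite big_ord_recl /= mul0r add0r.
by apply: eq_bigr => i _; rewrite /bump /= add1n subSS.
Qed.

Lemma Ebig x K : (0 < m)%N -> (m <= x)%N -> (x < m + y)%N -> E x K = 0.
Proof. by move=> *; rewrite /E big1 // => i _; rewrite Ckbig // mul0r. Qed.

Lemma H0 K : H 0 K = beta K.
Proof. by rewrite /H leq0n subn0. Qed.

Lemma Hbig x K : (0 < m)%N -> (m <= x)%N -> H x K = 0.
Proof. move=> h0 h; rewrite /H ifF //; apply/negbTE; rewrite -ltnNge; lia. Qed.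

Lemma Hrec x K : (0 < y)%N -> (0 < x)%N -> (x < m)%N ->
  H x K = H x.-1 K + (if K is K'.+1 then H (x + y) K' else 0).
Proof.
move=> hy h0 hm; rewrite /H.
have -> : (x <= m.-1)%N by lia.
have -> : (x.-1 <= m.-1)%N by lia.
have -> : (m.-1 - x.-1 = (m.-1 - x).+1)%N by lia.
case: K => [|K]; first by rewrite !bin0 addr0.
rewrite binlem // natrD mulrDr.
have -> : (x + y <= m.-1)%N = (y <= m.-1 - x)%N by apply/idP/idP; lia.
have -> : (m.-1 - (x + y) - y * K = m.-1 - x - y * K.+1)%N by rewrite mulnS; lia.
case: ifP => _; last by rewrite mulr0 !addr0.
by rewrite exprS; ring.
Qed.

Lemma EH K x : (0 < y)%N -> (0 < m)%N -> (x < m + y)%N -> E x K = H x K.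
Proof.
move=> hy hm; elim: K x => [|K IHK] x hx.
  case: (leqP m x) => hxm; first by rewrite Ebig // Hbig.
  elim: x hx hxm => [|x IHx] hx hxm; first by rewrite E0 H0.
  by rewrite Erec // Hrec //= IHx //; lia.
case: (leqP m x) => hxm; first by rewrite Ebig // Hbig.
elim: x hx hxm => [|x IHx] hx hxm; first by rewrite E0 H0.
rewrite Erec // Hrec //= IHx; try lia.
by rewrite IHK //; lia.
Qed.

Lemma Efinal K : (0 < y)%N -> (0 < m)%N -> E m.-1 K = (K == 0)%N%:R.
Proof.
move=> hy hm; rewrite EH //; last by lia.
rewrite /H leqnn subnn sub0n; case: K => [|K] /=; first by rewrite expr0 bin0 mul1r.
by rewrite bin0n /= mulr0.
Qed.
Lemma event_ev k s : event y m k s = ev (Posz m.-1) k s.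
Proof. by rewrite evE. Qed.

Lemma ell_tE k t : @ell_t R y m k t = (cnt (Posz m.-1) k t)%:R / 2%:R ^+ t.
Proof.
rewrite /ell_t /cnt; congr (_%:R / _); apply: eq_card => s.
by rewrite !inE event_ev.
Qed.

Lemma ellE k : @ell R y m k = (Ck m.-1 k)%:R / 2%:R ^+ (m.-1 + y.+1 * k).
Proof.
rewrite /ell; apply: lim_near_cst; first exact: Rhausdorff.
exists (m.-1 + y.+1 * k).+1 => // n /= hn.
rewrite /series /=.
rewrite big_mkord (bigD1 (Ordinal hn)) //= big1 ?addr0.
  by rewrite ell_tE.
move=> i hi; rewrite ell_tE cnt_len ?mul0r //.
Qed.

Lemma rising a n : (0 < a)%N -> (\prod_(i < n) (a + i))%N = (a + n - 1) ^_ n.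
Proof.
move=> ha; elim: n => [|n IH]; first by rewrite big_ord0 ffactn0.
rewrite big_ord_recr /= IH.
have -> : (a + n.+1 - 1 = (a + n - 1).+1)%N by lia.
rewrite ffactSS mulnC; congr (_ * _)%N; lia.
Qed.

Lemma gbinomN a n : (0 < a)%N ->
  @gbinom R (- a%:Z) n = (-1) ^+ n * ('C(a + n - 1, n))%:R.
Proof.
move=> ha; rewrite /gbinom.
have -> : \prod_(i < n) ((- a%:Z - i%:Z)%:~R : R) = \prod_(i < n) (- ((a + i)%N%:R)).
  by apply: eq_bigr => i _; rewrite -opprD -PoszD intrN.
rewrite prodrN card_ord -natr_prod rising // -bin_ffact natrM.
have h : (n`!)%:R != 0 :> R by rewrite pnatr_eq0 -lt0n fact_gt0.
by rewrite mulrA mulfK.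
Qed.

Lemma ucE n : (0 < y)%N -> (0 < m)%N ->
  @u_coef R y m%:Z (y * n) = beta n * 2%:R ^+ m.-1 / 2%:R ^+ (y.+1 * n).
Proof.
move=> hy hm; rewrite /u_coef dvdn_mulr // mulKn //=.
have h2 : forall q, (2%:R : R) ^+ q != 0 by move=> q; rewrite expf_neq0 // pnatr_eq0.
case: (ltnP (y.+1 * n) m) => h.
  have -> : ((y.+1 * n)%N%:Z - m%:Z < 0) = true by apply/idP; lia.
  have -> : (y.+1 * n)%N%:Z - m%:Z = - (m - y.+1 * n)%N%:Z by lia.
  rewrite gbinomN; last by lia.
  have -> : (m - y.+1 * n + n - 1 = m.-1 - y * n)%N by rewrite mulSn; lia.
  have -> : ((y.+1 * n).+1)%N%:Z - m%:Z = - (m.-1 - y.+1 * n)%N%:Z by lia.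
  rewrite -exprnN invrK -/(beta n).
  have -> : m.-1 = ((m.-1 - y.+1 * n) + y.+1 * n)%N by lia.
  by rewrite exprD mulrA mulfK // addnK.
have -> : ((y.+1 * n)%N%:Z - m%:Z < 0) = false by apply/negbTE; rewrite -leNgt; lia.
rewrite /beta bin_small ?mulr0 ?mul0r //.
rewrite mulSn in h; lia.
Qed.

Lemma sum_dvd (F : nat -> R) K : (0 < y)%N ->
  \sum_(0 <= i < (y * K).+1) (if (y %| i)%N then F (i %/ y)%N else 0) = \sum_(0 <= k < K.+1) F k.
Proof.
move=> hy; elim: K => [|K IH].
  by rewrite muln0 !big_nat1 dvdn0 div0n.
have -> : (y * K.+1).+1 = (((y * K).+1 + y.-1).+1)%N by rewrite mulnS; lia.
rewrite big_nat_recr //= (big_cat_nat _ (n := (y * K).+1)) //=; last by lia.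
rewrite IH [RHS]big_nat_recr //=.
have -> : ((y * K).+1 + y.-1 = y * K.+1)%N by rewrite mulnS; lia.
rewrite dvdn_mulr // mulKn // -addrA; congr (_ + _).
rewrite big_nat big1 ?add0r // => i /andP[h1 h2].
have -> : (y %| i)%N = false.
  rewrite -(subnK (ltnW h1)) dvdn_addl ?dvdn_mulr //.
  apply/negbTE/negP => /(dvdn_leq _) H.
  have : (0 < i - y * K)%N by lia.
  move/H; lia.
by [].
Qed.
End Walk.
Theorem mainTheorem1 (R : realType) (y m : nat) :
  (1 <= y)%N -> (2 <= m)%N ->
  forall N : nat,
    \sum_(i < N.+1) (@pl_coef R y m i * @u_coef R y m%:Z (N - i)%N)
    = (N == 0)%:R.
Proof.
move=> hy hm2 N; have hm : (0 < m)%N by lia.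
have h2 : forall q, (2%:R : R) ^+ q != 0 by move=> q; rewrite expf_neq0 // pnatr_eq0.
case: (boolP (y %| N)%N) => hN; last first.
  have -> : (N == 0)%N = false by apply: contraNF hN => /eqP ->; rewrite dvdn0.
  rewrite big1 // => i _; rewrite /pl_coef /u_coef.
  case hi: (y %| i)%N; last by rewrite mul0r.
  have -> : (y %| (N - i))%N = false.
    apply: contraNF hN => h.
    rewrite -(subnK (_ : i <= N)%N) ?dvdn_add //.
    by rewrite -ltnS ltn_ord.
  by rewrite /= mulr0.
have eN := divnK hN; set K := (N %/ y)%N in eN.
rewrite -eN mulnC -(big_mkord xpredT (fun i => @pl_coef R y m i * @u_coef R y m%:Z (y * K - i)%N)).
pose pc k : R := (Ck y m m.-1 k)%:R / 2%:R ^+ (m.-1 + y.+1 * k).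
pose uc n : R := beta y m R n * 2%:R ^+ m.-1 / 2%:R ^+ (y.+1 * n).
rewrite (eq_big_nat _ _ (F2 := fun i => if (y %| i)%N then pc (i %/ y)%N * uc (K - i %/ y)%N else 0)); last first.
  move=> i /andP[_ hi]; rewrite /pl_coef.
  case: ifP => hyi; last by rewrite mul0r.
  have ei := divnK hyi; set j := (i %/ y)%N in ei *.
  rewrite ellE.
  have -> : (y * K - i = y * (K - j))%N by rewrite mulnBr -ei [(j * y)%N]mulnC.
  by rewrite ucE.
rewrite (sum_dvd _ _ (fun k => pc k * uc (K - k)%N)) //.
rewrite (eq_big_nat _ _ (F2 := fun k => (Ck y m m.-1 k)%:R * beta y m R (K - k) / 2%:R ^+ (y.+1 * K))); last first.
  move=> k /andP[_ hk]; rewrite /pc /uc.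
  have -> : (y.+1 * K = y.+1 * k + y.+1 * (K - k))%N by rewrite -mulnDr subnKC //; lia.
  rewrite !exprD; field.
  by rewrite !h2.
rewrite -mulr_suml big_mkord -/(E y m R m.-1 K) Efinal //.
clear eN; clearbody K; case: K => [|K]; first by rewrite !muln0 /= expr0 divr1.
by rewrite /= mul0r muln_eq0 orbF; case: (y) hy.
Qed.
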